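(* Let $R$ be a ring with a linear Hausdorff topology, let $I$ be a well-ordered set, and let $\{e_i\}_{i\in I}$ be a summable family of idempotents with $e_ie_j=0$ whenever $i<j$. Put $e=\sum_{i\in I}e_i$. If $r\in R$ and $n\ge 1$ is an integer with $e^nr=0$, then $e_ir=0$ for all $i\in I$; in particular $er=0$.
   Context: A linear Hausdorff topology on a ring $R$ is a ring topology on $R$ having a basis $\mathfrak U$ of neighborhoods of $0$ consisting of left ideals, with $\bigcap_{U\in\mathfrak U}U=0$. A family $\{x_i\}_{i\in I}\subseteq R$ is summable to $r\in R$ if for every $U\in\mathfrak U$ there is a finite $F'\subseteq I$ with $\sum_{i\in F}x_i-r\in U$ for every finite $F$ with $F'\subseteq F\subseteq I$; one then writes $\sum_{i\in I}x_i=r$, and the family is called summable. *)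

(* Defs.v *)
From HB Require Import structures.
From mathcomp Require Import all_boot all_order all_algebra.
From mathcomp Require Import finmap.
Set Implicit Arguments. Unset Strict Implicit. Unset Printing Implicit Defensive.
Import Order.TTheory GRing.Theory.
Local Open Scope ring_scope.
Local Open Scope fset_scope.

Definition left_ideal (R : pzRingType) (U : R -> Prop) : Prop :=
  [/\ U 0, (forall x y, U x -> U y -> U (x - y))
    & (forall r x, U x -> U (r * x))].

(* [linear_hausdorff B]: B is a basis of neighbourhoods of 0 of a linear
   Hausdorff ring topology on R: a nonempty, downward directed family of left
   ideals, such that right multiplication is continuous at 0 (this is what makes
   the induced group topology a ring topology, since the members are left
   ideals), and whose intersection is {0}. *)
Record linear_hausdorff (R : pzRingType) (B : (R -> Prop) -> Prop) : Prop := {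
  lh_nonempty : exists U, B U;
  lh_ideal : forall U, B U -> left_ideal U;
  lh_directed : forall U V, B U -> B V ->
      exists2 W, B W & forall x, W x -> U x /\ V x;
  lh_rmul : forall U (a : R), B U -> exists2 V, B V & forall x, V x -> U (x * a);
  lh_hausdorff : forall x : R, (forall U, B U -> U x) -> x = 0
}.

Definition summable_to (R : pzRingType) (B : (R -> Prop) -> Prop)
    (I : choiceType) (x : I -> R) (r : R) : Prop :=
  forall U, B U -> exists F' : {fset I}, forall F : {fset I},
      F' `<=` F -> U (\sum_(i <- F) x i - r).

Definition summable (R : pzRingType) (B : (R -> Prop) -> Prop)
    (I : choiceType) (x : I -> R) : Prop :=
  exists r, summable_to B x r.

Definition well_ordered (d : Order.disp_t) (I : orderType d) : Prop :=
  well_founded (fun i j : I => (i < j)%O).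

(* Main.v *)
Require Import Defs.
From HB Require Import structures.
From mathcomp Require Import all_boot all_order all_algebra.
From mathcomp Require Import finmap.
Import Order.TTheory GRing.Theory.
Local Open Scope ring_scope.

Lemma key (R : pzRingType) (B : (R -> Prop) -> Prop)
    (hB : linear_hausdorff B)
    (d : Order.disp_t) (I : orderType d)
    (e_ : I -> R)
    (hidem : forall i, e_ i * e_ i = e_ i)
    (horth : forall i j, (i < j)%O -> e_ i * e_ j = 0)
    (e : R) (he : summable_to B e_ e) (i : I) (y : R)
    (hy : forall j, (j < i)%O -> e_ j * y = 0) :
  e_ i * (e * y) = e_ i * y.
Proof.
apply/eqP; rewrite -subr_eq0; apply/eqP; apply: (lh_hausdorff hB) => U BU.
have [V BV HV] := lh_rmul hB y BU.
have [F' HF] := he V BV.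
have := HV _ (HF (F' `|` [fset i])%fset (fsubsetUl _ _)).
have [U0 Usub Umul] := lh_ideal hB BU.
move=> /(Umul (e_ i)).
rewrite mulrBl mulrBr mulr_suml mulr_sumr (big_fsetD1 i) /=; last first.
  by rewrite !inE eqxx orbT.
rewrite big1_seq ?addr0; last first.
  move=> j /andP[_]; rewrite !inE => /andP[jni _].
  case: (ltgtP j i) => [ji|ij|ji]; last by rewrite ji eqxx in jni.
  - by rewrite hy ?mulr0.
  - by rewrite mulrA horth ?mul0r.
rewrite mulrA hidem => Ux.
have := Usub _ _ U0 Ux; by rewrite sub0r opprB ?mulrA.
Qed.

Theorem lemma5 (R : pzRingType) (B : (R -> Prop) -> Prop)
    (hB : linear_hausdorff B)
    (d : Order.disp_t) (I : orderType d) (hI : well_ordered I)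
    (e_ : I -> R)
    (hidem : forall i, e_ i * e_ i = e_ i)
    (horth : forall i j, (i < j)%O -> e_ i * e_ j = 0)
    (e : R) (he : summable_to B e_ e)
    (r : R) (n : nat) (hn : (1 <= n)%N) (hr : e ^+ n * r = 0) :
  (forall i, e_ i * r = 0) /\ e * r = 0.
Proof.
have P : forall i k, e_ i * (e ^+ k * r) = 0.
  move=> i; induction i as [i IH] using (well_founded_ind hI) => k.
  have step : forall k, e_ i * (e ^+ k.+1 * r) = e_ i * (e ^+ k * r).
    move=> m; rewrite exprS -(mulrA e); apply: (@key _ _ hB _ _ _ hidem horth _ he).
    by move=> j ji; apply: IH.
  have : forall m, e_ i * (e ^+ k * r) = e_ i * (e ^+ (m + k) * r).
    elim=> [|m IHm] //; by rewrite addSn step.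
  by move=> /(_ n); rewrite addnC exprD -(mulrA (e ^+ k)) hr mulr0 mulr0.
have Pi : forall i, e_ i * r = 0 by move=> i; have := P i 0%N; rewrite expr0 mul1r.
split=> //.
apply: (lh_hausdorff hB) => U BU.
have [V BV HV] := lh_rmul hB r BU.
have [F' HF] := he V BV.
have := HV _ (HF F' (fsubset_refl _)).
rewrite mulrBl mulr_suml big1_seq ?sub0r => [|j _]; last exact: Pi.
have [U0 Usub _] := lh_ideal hB BU.
by move=> H; have := Usub _ _ U0 H; rewrite sub0r opprK.
Qed.
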